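(* Let $m,n\ge2$, $\lambda>0$, $C\in\mathbb{R}^{m\times n}$, let $a\in\Delta_m$, $b\in\Delta_n$ have strictly positive entries, let $P=S_\lambda(C,a,b)$, and let $G\in\mathbb{R}^{m\times n}$. Consider the following procedure (Algorithm 1): 1. $T\leftarrow P\odot G$; 2. $\tilde T\leftarrow T_{:,1:n-1}$, $\tilde P\leftarrow P_{:,1:n-1}\in\mathbb{R}^{m\times(n-1)}$; 3. $t^{(a)}\leftarrow T\mathbb{1}_n$, $\tilde t^{(b)}\leftarrow\tilde T^\top\mathbb{1}_m$; 4. $\begin{bmatrix}g_a\\ g_{\tilde b}\end{bmatrix}\leftarrow\begin{bmatrix}\mathrm{diag}(a) & \tilde P\\ \tilde P^\top & \mathrm{diag}(\tilde b)\end{bmatrix}^{-1}\begin{bmatrix}t^{(a)}\\ \tilde t^{(b)}\end{bmatrix}$; 5. $g_b\leftarrow[g_{\tilde b};0]\in\mathbb{R}^n$; 6. $U\leftarrow g_a\mathbb{1}_n^\top+\mathbb{1}_m g_b^\top$; 7. $G_C\leftarrow-\lambda^{-1}(T-P\odot U)$. Then the $(m+n-1)\times(m+n-1)$ matrix in step 4 is invertible, and $(x,y)=(\mathrm{vec}(G_C),[g_a;g_{\tilde b}])$ is the (unique) solution of $$\begin{bmatrix}\lambda\,\mathrm{diag}(p)^{-1} & \tilde E\\ \tilde E^\top & \mathbf{0}\end{bmatrix}\begin{bmatrix}x\\ -y\end{bmatrix}=\begin{bmatrix}-\mathrm{vec}(G)\\ \mathbf{0}\end{bmatrix},\quad p=\mathrm{vec}(P).$$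 Consequently, if $G=\nabla_P\ell$ for a loss $\ell$ depending on $(C,a,b)$ only through $P=S_\lambda(C,a,b)$ (as in Theorem 1), then $G_C=\nabla_C\ell$, $g_a=\nabla_a\ell$ and $g_{\tilde b}=\nabla_{\tilde b}\ell$.
   Context: $\Delta_m=\{a\in\mathbb{R}^m: a_i\ge 0,\ \sum_i a_i=1\}$; $\Pi(a,b)=\{P\in\mathbb{R}^{m\times n}_{\ge0}: P\mathbb{1}_n=a,\ P^\top\mathbb{1}_m=b\}$; $h(P)=-\sum_{i,j}P_{i,j}(\log P_{i,j}-1)$; $S_\lambda(C,a,b)=\arg\min_{P\in\Pi(a,b)}\langle P,C\rangle_F-\lambda h(P)$. $\odot$ is the entrywise (Hadamard) product, $\mathbb{1}_k$ the all-ones vector in $\mathbb{R}^k$. For $v\in\mathbb{R}^n$, $\tilde v=(v_1,\dots,v_{n-1})$. Vectorization is column-major ($\mathrm{vec}(X)_{(j-1)m+i}=X_{i,j}$). $E=[\mathbb{1}_n\otimes I_m,\ I_n\otimes\mathbb{1}_m]\in\mathbb{R}^{mn\times(m+n)}$ and $\tilde E$ is $E$ with its last column deleted. Theorem 1: for the implicit map $(c,a,\tilde b)\mapsto p$ defined by the KKT conditions of the Sinkhorn problem (with the last column-marginal constraint dropped and $\beta_n=0$), the gradients of $\ell=L(p)$ satisfy $\begin{bmatrix}\lambda\mathrm{diag}(p)^{-1}&\tilde E\\ \tilde E^\top&0\end{bmatrix}\begin{bmatrix}\nabla_c\ell\\-\nabla_{[a;\tilde b]}\ell\end{bmatrix}=\begin{bmatrix}-\nabla_p\ell\\0\end{bmatrix}$.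 *)

(* Defs.v *)
From HB Require Import structures.
From mathcomp Require Import all_boot all_order all_algebra.
From mathcomp Require Import reals exp.
Set Implicit Arguments. Unset Strict Implicit. Unset Printing Implicit Defensive.
Import Order.TTheory GRing.Theory Num.Theory.
Local Open Scope ring_scope.

Section Defs.
Variable R : realType.

Definition in_simplex k (a : 'cV[R]_k) : Prop :=
  (forall i, 0 <= a i 0) /\ \sum_(i < k) a i 0 = 1.

Definition in_transport m n (a : 'cV[R]_m) (b : 'cV[R]_n) (P : 'M[R]_(m, n)) :
  Prop :=
  (forall i j, 0 <= P i j) /\ P *m const_mx 1 = a /\ P^T *m const_mx 1 = b.

Definition entropy m n (P : 'M[R]_(m, n)) : R :=
  - \sum_(i < m) \sum_(j < n) P i j * (ln (P i j) - 1).

Definition frob m n (P C : 'M[R]_(m, n)) : R :=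
  \sum_(i < m) \sum_(j < n) P i j * C i j.

Definition is_sinkhorn m n (lam : R) (C : 'M[R]_(m, n)) (a : 'cV[R]_m)
  (b : 'cV[R]_n) (P : 'M[R]_(m, n)) : Prop :=
  in_transport a b P /\
  forall Q, in_transport a b Q ->
    frob P C - lam * entropy P <= frob Q C - lam * entropy Q.

(* column-major vectorization: vec X at index (j-1)m+i is X_ij.
   MathComp's mxvec is row-major, so mxvec of the transpose is column-major. *)
Definition vec m n (X : 'M[R]_(m, n)) : 'cV[R]_(n * m) := (mxvec X^T)^T.

Definition hadamard m n (X Y : 'M[R]_(m, n)) : 'M[R]_(m, n) :=
  \matrix_(i, j) (X i j * Y i j).

(* columns of E = [1_n (x) I_m, I_n (x) 1_m] *)
Definition Ecol m n (l : 'I_(m + n)) : 'M[R]_(m, n) :=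
  match split l with
  | inl i0 => \matrix_(i, j) (i == i0)%:R
  | inr j0 => \matrix_(i, j) (j == j0)%:R
  end.

Definition Emx m n : 'M[R]_(n * m, m + n) :=
  \matrix_(k, l) vec (Ecol l) k 0.

Lemma widen_tilde_le m n : (m + n.-1 <= m + n)%N.
Proof. by rewrite leq_add2l leq_pred. Qed.

Definition Etilde m n : 'M[R]_(n * m, m + n.-1) :=
  \matrix_(k, l) Emx m n k (widen_ord (@widen_tilde_le m n) l).

Definition tcols m n (X : 'M[R]_(m, n)) : 'M[R]_(m, n.-1) :=
  \matrix_(i, j) X i (widen_ord (leq_pred n) j).
Definition tvec n (v : 'cV[R]_n) : 'cV[R]_(n.-1) :=
  \col_j v (widen_ord (leq_pred n) j) 0.

Section Alg.
Variables (m n : nat) (lam : R) (a : 'cV[R]_m) (b : 'cV[R]_n)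
  (P G : 'M[R]_(m, n)).

Definition alg_T := hadamard P G.
Definition alg_ta : 'cV[R]_m := alg_T *m const_mx 1.
Definition alg_tb : 'cV[R]_(n.-1) := (tcols alg_T)^T *m const_mx 1.
Definition alg_K : 'M[R]_(m + n.-1) :=
  block_mx (diag_mx a^T) (tcols P) (tcols P)^T (diag_mx (tvec b)^T).
Definition alg_g : 'cV[R]_(m + n.-1) := invmx alg_K *m col_mx alg_ta alg_tb.
Definition alg_ga : 'cV[R]_m := usubmx alg_g.
Definition alg_gbt : 'cV[R]_(n.-1) := dsubmx alg_g.
Definition alg_gb : 'cV[R]_n :=
  \col_j (match insub (val j) with Some j' => alg_gbt j' 0 | None => 0 end).
Definition alg_U : 'M[R]_(m, n) := \matrix_(i, j) (alg_ga i 0 + alg_gb j 0).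
Definition alg_GC : 'M[R]_(m, n) :=
  - lam^-1 *: (alg_T - hadamard P alg_U).
End Alg.

Definition kkt m n (lam : R) (P : 'M[R]_(m, n)) :
  'M[R]_(n * m + (m + n.-1)) :=
  block_mx (lam *: diag_mx (map_mx (fun x => x^-1) (vec P))^T) (Etilde m n)
           (Etilde m n)^T 0.

End Defs.

(* Main.v *)
Require Import Defs.
From HB Require Import structures.
From mathcomp Require Import all_boot all_order all_algebra.
From mathcomp Require Import reals exp sequences.
From mathcomp Require Import ring lra.
Import Order.TTheory GRing.Theory Num.Theory.
Local Open Scope ring_scope.
Set Implicit Arguments. Unset Strict Implicit.

Section Pos.
Variable R : realType.

Lemma phi_bound (x y : R) : 0 <= x -> 0 < y -> x * ln y - x * ln x <= y - x.
Proof.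
move=> x0 y0; move: x0; rewrite le_eqVlt => /orP [/eqP <-|xp].
  by rewrite !mul0r subrr subr0 ltW.
have hq : 0 < y / x by rewrite divr_gt0.
have h1 : -1 < y / x - 1 by rewrite ltrBrDr addrC subrr.
have h := le_ln1Dx h1.
have e : 1 + (y / x - 1) = y / x by ring.
rewrite e in h.
rewrite ln_div ?posrE // in h.
rewrite -mulrBr (le_trans (ler_wpM2l (ltW xp) h)) //.
by rewrite mulrBr mulr1 mulrCA divff ?mulr1 // gt_eqF.
Qed.

Lemma entry_bound (lam c x y : R) : 0 <= lam -> 0 <= x -> (y = x \/ 0 < y) ->
  (y * c + lam * (y * (ln y - 1))) - (x * c + lam * (x * (ln x - 1)))
    <= (c + lam * ln y) * (y - x).
Proof.
move=> hl hx [->|hy]; first by rewrite !subrr mulr0.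
rewrite -subr_ge0.
have -> : (c + lam * ln y) * (y - x) -
    (y * c + lam * (y * (ln y - 1)) - (x * c + lam * (x * (ln x - 1)))) =
    lam * ((y - x) - (x * ln y - x * ln x)) by ring.
by apply: mulr_ge0 => //; rewrite subr_ge0 phi_bound.
Qed.

Lemma obj_sum m n lam (C Q : 'M[R]_(m, n)) :
  frob Q C - lam * entropy Q =
  \sum_i \sum_j (Q i j * C i j + lam * (Q i j * (ln (Q i j) - 1))).
Proof.
rewrite /frob /entropy mulrN opprK mulr_sumr -big_split /=.
by apply: eq_bigr => i _; rewrite mulr_sumr -big_split.
Qed.

Definition Lw m n (w M : 'M[R]_(m, n)) := \sum_i \sum_j w i j * M i j.

Lemma LwD m n (w A B : 'M[R]_(m, n)) : Lw w (A + B) = Lw w A + Lw w B.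
Proof.
rewrite /Lw -big_split; apply: eq_bigr => i _; rewrite -big_split.
by apply: eq_bigr => j _; rewrite mxE mulrDr.
Qed.

Lemma LwB m n (w A B : 'M[R]_(m, n)) : Lw w (A - B) = Lw w A - Lw w B.
Proof.
rewrite /Lw -sumrB; apply: eq_bigr => i _; rewrite -sumrB.
by apply: eq_bigr => j _; rewrite !mxE mulrBr.
Qed.

Lemma Lw_delta m n (w : 'M[R]_(m, n)) k l : Lw w (delta_mx k l) = w k l.
Proof.
rewrite /Lw (bigD1 k) //= [X in _ + X]big1 ?addr0; last first.
  move=> i /negbTE hi; apply: big1 => j _; by rewrite mxE hi mulr0.
rewrite (bigD1 l) //= [X in _ + X]big1 ?addr0; last first.
  move=> j /negbTE hj; by rewrite mxE eqxx hj mulr0.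
by rewrite mxE !eqxx mulr1.
Qed.

Lemma LwZ m n (w M : 'M[R]_(m, n)) (t : R) : Lw w (t *: M) = t * Lw w M.
Proof.
rewrite /Lw mulr_sumr; apply: eq_bigr => i _; rewrite mulr_sumr.
by apply: eq_bigr => j _; rewrite mxE mulrCA.
Qed.

Lemma delta_row m n (k : 'I_m) (l : 'I_n) :
  delta_mx k l *m const_mx 1 = delta_mx k 0 :> 'cV[R]_m.
Proof.
apply/matrixP => i c; rewrite (ord1 c) !mxE.
rewrite (bigD1 l) //= [X in _ + X]big1 ?addr0; last first.
  by move=> j /negbTE hj; rewrite !mxE hj andbF mul0r.
by rewrite !mxE !eqxx andbT mulr1.
Qed.

Lemma sinkhorn_pos m n lam (C : 'M[R]_(m, n)) (a : 'cV[R]_m) (b : 'cV[R]_n)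
  (P : 'M[R]_(m, n)) :
  0 < lam -> (forall i, 0 < a i 0) -> (forall j, 0 < b j 0) ->
  is_sinkhorn lam C a b P -> forall i j, 0 < P i j.
Proof.
move=> hl apos bpos [[P0 [ha hb]] hmin] i0 j0.
rewrite lt_def P0 andbT; apply/negP => /eqP Pz.
have [j1 Pj1] : exists j1, 0 < P i0 j1.
  case: (boolP [exists j, 0 < P i0 j]) => [/existsP //|/existsPn hn].
  have : a i0 0 <= 0.
    rewrite -ha mxE; apply: sumr_le0 => j _; rewrite mxE mulr1 leNgt.
    exact: hn.
  by rewrite leNgt apos.
have [i1 Pi1] : exists i1, 0 < P i1 j0.
  case: (boolP [exists i, 0 < P i j0]) => [/existsP //|/existsPn hn].
  have : b j0 0 <= 0.
    rewrite -hb mxE; apply: sumr_le0 => i _; rewrite !mxE mulr1 leNgt.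
    exact: hn.
  by rewrite leNgt bpos.
have j01 : j0 != j1 by apply/eqP => e; move: Pj1; rewrite -e Pz ltxx.
have i01 : i0 != i1 by apply/eqP => e; move: Pi1; rewrite -e Pz ltxx.

have j10 : j1 != j0 by rewrite eq_sym.
have i10 : i1 != i0 by rewrite eq_sym.
pose s := Num.min 1 (Num.min (P i0 j1) (P i1 j0) / 2).
have hM0 : 0 < Num.min (P i0 j1) (P i1 j0) by rewrite lt_min Pj1 Pi1.
have hM1 : Num.min (P i0 j1) (P i1 j0) <= P i0 j1 by rewrite ge_min lexx.
have hM2 : Num.min (P i0 j1) (P i1 j0) <= P i1 j0 by rewrite ge_min lexx orbT.
have s0 : 0 < s by rewrite lt_min ltr01 divr_gt0.
have s1 : s <= 1 by rewrite ge_min lexx.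
have s2 : s <= Num.min (P i0 j1) (P i1 j0) / 2 by rewrite ge_min lexx orbT.
pose cC := C i0 j0 + C i1 j1 - C i0 j1 - C i1 j0.
pose l11 := ln (P i1 j1 + 1).
pose ls := ln s.
pose K := (`|cC| + lam * `|l11| + 2 * (lam * `|ls|) + 1) / lam.
pose t := Num.min s (expR (- K)).
have t0 : 0 < t by rewrite lt_min s0 expR_gt0.
have ts : t <= s by rewrite ge_min lexx.
have tK : t <= expR (- K) by rewrite ge_min lexx orbT.
have P11 := P0 i1 j1.
have b1 : lam * ln t <= - (`|cC| + lam * `|l11| + 2 * (lam * `|ls|) + 1).
  have -> : - (`|cC| + lam * `|l11| + 2 * (lam * `|ls|) + 1) = lam * (- K).
    by rewrite /K; field; rewrite gt_eqF.
  rewrite ler_pM2l // -[X in _ <= X](expRK (- K)) ler_ln ?posrE ?expR_gt0 //.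
have b2 : lam * ln (P i1 j1 + t) <= lam * `|l11|.
  rewrite ler_pM2l // (le_trans _ (ler_norm _)) // ler_ln ?posrE; lra.
have b3 : - (lam * ln (P i0 j1 - t)) <= lam * `|ls|.
  rewrite -mulrN ler_pM2l // -normrN (le_trans _ (ler_norm _)) //.
  rewrite lerN2 ler_ln ?posrE; lra.
have b4 : - (lam * ln (P i1 j0 - t)) <= lam * `|ls|.
  rewrite -mulrN ler_pM2l // -normrN (le_trans _ (ler_norm _)) //.
  rewrite lerN2 ler_ln ?posrE; lra.
have b5 : cC <= `|cC| := ler_norm _.
pose D : 'M[R]_(m, n) :=
  delta_mx i0 j0 + delta_mx i1 j1 - delta_mx i0 j1 - delta_mx i1 j0.
pose Q := P + t *: D.
have hQc : forall i j, Q i j = P i j \/ 0 < Q i j.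
  move=> i j; rewrite !mxE.
  have Pij := P0 i j.
  have [ei0|ni0] := eqVneq i i0.
    rewrite ei0 (negbTE i01) /=.
    have [ej0|nj0] := eqVneq j j0.
      rewrite ej0 (negbTE j01) Pz /=; right; lra.
    have [ej1|nj1] := eqVneq j j1.
      rewrite ej1 ?(negbTE j10) /=; right; lra.
    rewrite /=; left; lra.
  have [ei1|ni1] := eqVneq i i1.
    rewrite ei1 ?(negbTE i10) /=.
    have [ej0|nj0] := eqVneq j j0.
      rewrite ej0 ?(negbTE j01) /=; right; lra.
    have [ej1|nj1] := eqVneq j j1.
      rewrite ej1 ?(negbTE j10) /=; right; lra.
    rewrite /=; left; lra.
  rewrite /=; left; lra.
have Q0 : forall i j, 0 <= Q i j.
  by move=> i j; case: (hQc i j) => [->|/ltW].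
have hQa : Q *m const_mx 1 = a.
  rewrite /Q /D mulmxDl -scalemxAl !mulmxBl !mulmxDl !delta_row ha.
  by rewrite addrAC addrK subrr scaler0 addr0.
have hQb : Q^T *m const_mx 1 = b.
  rewrite /Q /D linearD linearZ /= !linearB !linearD /= !trmx_delta.
  rewrite -scalerDr -!scalerBr mulmxDl -scalemxAl !mulmxBl !mulmxDl !delta_row hb.
  by rewrite addrK subrr scaler0 addr0.
have hle := hmin Q (conj Q0 (conj hQa hQb)).
rewrite !obj_sum in hle.
pose w : 'M[R]_(m, n) := \matrix_(i, j) (C i j + lam * ln (Q i j)).
have hup : (\sum_i \sum_j (Q i j * C i j + lam * (Q i j * (ln (Q i j) - 1))))
   - (\sum_i \sum_j (P i j * C i j + lam * (P i j * (ln (P i j) - 1))))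
   <= Lw w (Q - P).
  rewrite /Lw -sumrB; apply: ler_sum => i _; rewrite -sumrB; apply: ler_sum => j _.
  rewrite [w i j]mxE [(Q - P) i j]mxE [(- P) i j]mxE.
  exact: entry_bound (ltW hl) (P0 i j) (hQc i j).
have eQ00 : Q i0 j0 = t.
  rewrite !mxE !eqxx ?(negbTE i01) ?(negbTE i10) ?(negbTE j01) ?(negbTE j10) Pz /=; lra.
have eQ11 : Q i1 j1 = P i1 j1 + t.
  rewrite !mxE !eqxx ?(negbTE i01) ?(negbTE i10) ?(negbTE j01) ?(negbTE j10) /=; lra.
have eQ01 : Q i0 j1 = P i0 j1 - t.
  rewrite !mxE !eqxx ?(negbTE i01) ?(negbTE i10) ?(negbTE j01) ?(negbTE j10) /=; lra.
have eQ10 : Q i1 j0 = P i1 j0 - t.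
  rewrite !mxE !eqxx ?(negbTE i01) ?(negbTE i10) ?(negbTE j01) ?(negbTE j10) /=; lra.
have hQP : Q - P = t *: D by rewrite /Q addrAC subrr add0r.
rewrite hQP LwZ /D !LwB LwD !Lw_delta in hup.
rewrite [w i0 j0]mxE [w i1 j1]mxE [w i0 j1]mxE [w i1 j0]mxE eQ00 eQ11 eQ01 eQ10 in hup.
have key : C i0 j0 + lam * ln t + (C i1 j1 + lam * ln (P i1 j1 + t))
   - (C i0 j1 + lam * ln (P i0 j1 - t)) - (C i1 j0 + lam * ln (P i1 j0 - t)) < 0.
  move: b1 b2 b3 b4 b5; rewrite /cC /l11 /ls => b1 b2 b3 b4 b5; lra.
have hneg : t * (C i0 j0 + lam * ln t + (C i1 j1 + lam * ln (P i1 j1 + t))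
   - (C i0 j1 + lam * ln (P i0 j1 - t)) - (C i1 j0 + lam * ln (P i1 j0 - t))) < 0.
  by rewrite -oppr_gt0 -mulrN; apply: mulr_gt0 => //; rewrite oppr_gt0.
lra.
Qed.

End Pos.

Set Implicit Arguments. Unset Strict Implicit.

Section Aux.
Variable R : realType.

Lemma vecE m n (X : 'M[R]_(m,n)) i j : vec X (mxvec_index j i) 0 = X i j.
Proof. by rewrite /vec mxE mxvecE mxE. Qed.

Lemma vec_inj m n (X Y : 'M[R]_(m,n)) : vec X = vec Y -> X = Y.
Proof. by move=> h; apply/matrixP=> i j; rewrite -(vecE X) -(vecE Y) h. Qed.

Definition unvec m n (x : 'cV[R]_(n * m)) : 'M[R]_(m,n) :=
  \matrix_(i,j) x (mxvec_index j i) 0.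

Lemma unvecK m n (x : 'cV[R]_(n * m)) : vec (unvec x) = x.
Proof.
apply/matrixP=> k c; rewrite (ord1 c); case/mxvec_indexP: k => j i.
by rewrite vecE mxE.
Qed.

Lemma sum_vec m n (F : 'I_(n * m) -> R) :
  \sum_k F k = \sum_(i < m) \sum_(j < n) F (mxvec_index j i).
Proof.
rewrite (reindex _ (curry_mxvec_bij _ _)) /=.
rewrite exchange_big pair_big /=.
by apply: eq_bigr => -[j i].
Qed.

Lemma sum_delta m (i : 'I_m) (f : 'I_m -> R) :
  \sum_i0 (i0 == i)%:R * f i0 = f i.
Proof.
rewrite (bigD1 i) //= eqxx mul1r big1 ?addr0 // => i0 /negbTE ->.
by rewrite mul0r.
Qed.

Definition ext n (w : 'cV[R]_n) : 'cV[R]_(n.+1) :=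
  \col_j (match insub (val j) with Some j' => w j' 0 | None => 0 end).

Lemma ext_widen n (w : 'cV[R]_n) (j : 'I_n) p :
  ext w (widen_ord p j) 0 = w j 0.
Proof.
rewrite mxE; case: insubP => [u _ hu|]; last by rewrite /= ltn_ord.
by congr (w _ 0); apply: val_inj.
Qed.

Lemma ext_max n (w : 'cV[R]_n) : ext w ord_max 0 = 0.
Proof. by rewrite mxE; case: insubP => [u|//]; rewrite /= ltnn. Qed.

Lemma sum_delta_ext0 n (j : 'I_n.+1) (f : 'I_n -> R) p :
  \sum_(j0 < n) (j == widen_ord p j0)%:R * f j0 = ext (\col_k f k) j 0.
Proof.
rewrite mxE; case: insubP => [u _ hu|hn].
  rewrite (bigD1 u) //= mxE.
  have -> : j == widen_ord p u by apply/eqP/val_inj; rewrite /= hu.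
  rewrite mul1r big1 ?addr0 // => i0 hi.
  have -> : (j == widen_ord p i0) = false.
    apply/negbTE; apply: contra hi => /eqP hj; apply/eqP/val_inj.
    by rewrite hu hj.
  by rewrite mul0r.
rewrite big1 // => i0 _; have -> : (j == widen_ord p i0) = false.
  apply/negbTE; apply: contra hn => /eqP -> /=; exact: ltn_ord.
by rewrite mul0r.
Qed.

Lemma Ecol_l m n (i0 : 'I_m) i j : Ecol R (lshift n i0) i j = (i == i0)%:R.
Proof.
rewrite /Ecol (_ : split (lshift n i0) = inl i0) ?mxE //.
exact: (unsplitK (inl _ i0)).
Qed.

Lemma Ecol_r m n (j0 : 'I_n) i j : Ecol R (rshift m j0) i j = (j == j0)%:R.
Proof.
rewrite /Ecol (_ : split (rshift m j0) = inr j0) ?mxE //.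
exact: (unsplitK (inr _ j0)).
Qed.

Lemma Et_l m n (i0 : 'I_m) i j :
  Etilde R m n.+1 (mxvec_index j i) (lshift n i0) = (i == i0)%:R.
Proof.
rewrite /Etilde /Emx mxE mxE vecE.
rewrite (_ : widen_ord _ _ = lshift n.+1 i0) ?Ecol_l //; exact: val_inj.
Qed.

Lemma Et_r m n (j0 : 'I_n) i j :
  Etilde R m n.+1 (mxvec_index j i) (rshift m j0) =
    (j == widen_ord (leq_pred n.+1) j0)%:R.
Proof.
rewrite /Etilde /Emx mxE mxE vecE.
rewrite (_ : widen_ord _ _ = rshift m (widen_ord (leq_pred n.+1) j0)) ?Ecol_r //.
exact: val_inj.
Qed.


Lemma sum_delta_ext n (j : 'I_n.+1) (w : 'cV[R]_n) p :
  \sum_(j0 < n) (j == widen_ord p j0)%:R * w j0 0 = ext w j 0.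
Proof.
rewrite sum_delta_ext0; rewrite !mxE; case: insubP => // u _ _; by rewrite mxE.
Qed.

Definition Umx m n (y : 'cV[R]_(m + n)) : 'M[R]_(m, n.+1) :=
  \matrix_(i,j) (usubmx y i 0 + ext (dsubmx y) j 0).

Lemma Et_mul m n (y : 'cV[R]_(m + n)) : Etilde R m n.+1 *m y = vec (Umx y).
Proof.
apply/matrixP => k c; rewrite (ord1 c); case/mxvec_indexP: k => j i.
rewrite vecE mxE [RHS]mxE big_split_ord /=; congr (_ + _).
  rewrite mxE -(sum_delta i (fun i0 => y (lshift n i0) 0)).
  by apply: eq_bigr => i0 _; rewrite Et_l eq_sym.
rewrite -(sum_delta_ext j (dsubmx y) (leq_pred n.+1)).
by apply: eq_bigr => j0 _; rewrite Et_r mxE.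
Qed.

Lemma EtT_mul m n (X : 'M[R]_(m, n.+1)) :
  (Etilde R m n.+1)^T *m vec X =
  col_mx (X *m const_mx 1) ((tcols X)^T *m const_mx 1).
Proof.
apply/matrixP => l c; rewrite (ord1 c) mxE sum_vec.
rewrite -[l]splitK; case: (split l) => [i0|j0] /=.
- rewrite col_mxEu mxE.
  under eq_bigr do under eq_bigr do rewrite mxE Et_l vecE.
  rewrite (bigD1 i0) //= [X in _ + X]big1 ?addr0; last first.
    by move=> i /negbTE ->; apply: big1 => j _; rewrite mul0r.
  by apply: eq_bigr => j _; rewrite eqxx mul1r mxE mulr1.
- rewrite col_mxEd mxE.
  under eq_bigr do under eq_bigr do rewrite mxE Et_r vecE.
  rewrite exchange_big /= (bigD1 (widen_ord (leq_pred n.+1) j0)) //=.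
  rewrite [X in _ + X]big1 ?addr0; last first.
    by move=> j /negbTE ->; apply: big1 => i _; rewrite mul0r.
  by apply: eq_bigr => i _; rewrite eqxx mul1r !mxE mulr1.
Qed.

Lemma diag_mul m n (lam : R) (P X : 'M[R]_(m,n)) :
  lam *: diag_mx (map_mx (fun x => x^-1) (vec P))^T *m vec X =
  vec (\matrix_(i,j) (lam * (P i j)^-1 * X i j)).
Proof.
apply/matrixP => k c; rewrite (ord1 c); case/mxvec_indexP: k => j i.
rewrite -scalemxAl mul_diag_mx.
rewrite [RHS]vecE [RHS]mxE mxE mxE [_^T 0 _]mxE [map_mx _ _ _ _]mxE !vecE.
by rewrite mulrA.
Qed.


Lemma K_mul m n (a : 'cV[R]_m) (b : 'cV[R]_(n.+1)) (P : 'M[R]_(m, n.+1))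
  (y : 'cV[R]_(m + n)) :
  P *m const_mx 1 = a -> P^T *m const_mx 1 = b ->
  alg_K a b P *m y = (Etilde R m n.+1)^T *m vec (hadamard P (Umx y)).
Proof.
move=> ha hb; rewrite EtT_mul -{1}[y]vsubmxK /alg_K mul_block_col.
congr col_mx; apply/matrixP => i c; rewrite (ord1 c) {c}.
- rewrite mxE mul_diag_mx mxE [a^T _ _]mxE -ha mxE [(tcols P *m _) _ _]mxE.
  rewrite [RHS]mxE.
  under eq_bigr do rewrite [const_mx _ _ _]mxE mulr1.
  under [RHS]eq_bigr do rewrite [hadamard _ _ _ _]mxE [Umx _ _ _]mxE [const_mx _ _ _]mxE mulr1 mulrDr.
  rewrite big_split /= -mulr_suml [X in _ = _ + X]big_ord_recr /= ext_max mulr0 addr0.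
  under [X in _ = _ + X]eq_bigr do rewrite ext_widen.
  congr (_ + _); apply: eq_bigr => j _; rewrite mxE; congr (P i _ * _).
  exact: val_inj.
- rewrite mxE mul_diag_mx [RHS]mxE.
  under [RHS]eq_bigr do rewrite [(tcols _)^T _ _]mxE [tcols _ _ _]mxE [hadamard _ _ _ _]mxE [Umx _ _ _]mxE [const_mx _ _ _]mxE mulr1 mulrDr ext_widen.
  rewrite big_split /= -mulr_suml; congr (_ + _).
    by rewrite mxE; apply: eq_bigr => j _; rewrite !mxE.
  rewrite mxE [(tvec b)^T _ _]mxE mxE -hb mxE; congr (_ * _).
  by apply: eq_bigr => j _; rewrite !mxE mulr1.
Qed.



Lemma K_unit m n (i0 : 'I_m) (a : 'cV[R]_m) (b : 'cV[R]_(n.+1))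
  (P : 'M[R]_(m, n.+1)) :
  (forall i j, 0 < P i j) -> P *m const_mx 1 = a -> P^T *m const_mx 1 = b ->
  alg_K a b P \in unitmx.
Proof.
move=> Ppos ha hb; rewrite unitmxE unitfE -det_tr.
apply/negP => /det0P [v vnz hv].
have hy : alg_K a b P *m v^T = 0.
  by rewrite -[alg_K a b P]trmxK -trmx_mul hv trmx0.
rewrite K_mul // in hy.
set U := Umx v^T in hy.
have hq : (vec U)^T *m vec (hadamard P U) = 0.
  by rewrite -Et_mul trmx_mul -mulmxA hy mulmx0.
have hs : ((vec U)^T *m vec (hadamard P U)) 0 0 = 0 by rewrite hq mxE.
rewrite mxE sum_vec in hs.
have hge : forall i j, 0 <= U i j * (P i j * U i j).
  move=> i j; rewrite mulrCA; apply: mulr_ge0; first exact: ltW.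
  by rewrite -expr2; exact: sqr_ge0.
have hU : forall i j, U i j = 0.
  move=> i j.
  have hs1 : \sum_(i < m) \sum_(j < n.+1) U i j * (P i j * U i j) = 0.
    rewrite -[RHS]hs; apply: eq_bigr => i1 _; apply: eq_bigr => j1 _.
    by rewrite [_^T _ _]mxE !vecE [hadamard _ _ _ _]mxE.
  have h1 := psumr_eq0P (fun i1 _ => sumr_ge0 _ (fun j1 _ => hge i1 j1)) hs1 (i:=i) isT.
  have := psumr_eq0P (fun j1 _ => hge i j1) h1 (i:=j) isT.
  rewrite mulrCA => /eqP; rewrite mulf_eq0 (gt_eqF (Ppos i j)) /= mulf_eq0 orbb.
  by move/eqP.
have hu : usubmx v^T = 0.
  apply/matrixP => i c; rewrite (ord1 c) [RHS]mxE.
  by have := hU i ord_max; rewrite mxE ext_max addr0.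
have hd : dsubmx v^T = 0.
  apply/matrixP => j c; rewrite (ord1 c) [RHS]mxE.
  have := hU i0 (widen_ord (leq_pred n.+1) j); rewrite mxE ext_widen hu mxE add0r.
  by [].
by move/eqP: vnz; apply; apply: trmx_inj; rewrite trmx0 -[v^T]vsubmxK hu hd col_mx0.
Qed.


Lemma vecB m n (X Y : 'M[R]_(m, n)) : vec (X - Y) = vec X - vec Y.
Proof.
apply/matrixP => k c; rewrite (ord1 c); case/mxvec_indexP: k => j i.
by rewrite vecE [RHS]mxE [Z in _ = _ + Z]mxE !vecE !mxE.
Qed.

Lemma vecZ m n (c : R) (X : 'M[R]_(m, n)) : vec (c *: X) = c *: vec X.
Proof.
apply/matrixP => k c0; rewrite (ord1 c0); case/mxvec_indexP: k => j i.
by rewrite [RHS]mxE !vecE !mxE.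
Qed.

Definition GCy m n (lam : R) (P G : 'M[R]_(m, n.+1)) (y : 'cV[R]_(m + n)) :=
  - lam^-1 *: (alg_T P G - hadamard P (Umx y)).

Lemma GC_eq m n (lam : R) a b (P G : 'M[R]_(m, n.+1)) :
  alg_GC lam a b P G = GCy lam P G (alg_g a b P G).
Proof. by []. Qed.

Lemma EtT_GCy m n lam (a : 'cV[R]_m) (b : 'cV[R]_(n.+1)) (P G : 'M[R]_(m, n.+1))
  (y : 'cV[R]_(m + n)) :
  P *m const_mx 1 = a -> P^T *m const_mx 1 = b ->
  (Etilde R m n.+1)^T *m vec (GCy lam P G y) =
  - lam^-1 *: (col_mx (alg_ta P G) (alg_tb P G) - alg_K a b P *m y).
Proof.
move=> ha hb; rewrite /GCy vecZ vecB -scalemxAr mulmxBr K_mul //.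
by rewrite !EtT_mul.
Qed.

Lemma kkt_mul m n lam (P : 'M[R]_(m, n.+1)) x (y : 'cV[R]_(m + n)) :
  kkt lam P *m col_mx x (- y) =
  col_mx (lam *: diag_mx (map_mx (fun x => x^-1) (vec P))^T *m x
            - Etilde R m n.+1 *m y)
         ((Etilde R m n.+1)^T *m x).
Proof. by rewrite /kkt mul_block_col mul0mx addr0 mulmxN. Qed.


Lemma top_entry m n lam (P X : 'M[R]_(m, n.+1)) y i j :
  (lam *: diag_mx (map_mx (fun x => x^-1) (vec P))^T *m vec X
    - Etilde R m n.+1 *m y) (mxvec_index j i) 0 =
  lam / P i j * X i j - Umx y i j.
Proof.
rewrite diag_mul Et_mul [LHS]mxE [Z in _ + Z = _]mxE !vecE.
by rewrite mxE.
Qed.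

Lemma GCy_entry m n lam (P G : 'M[R]_(m, n.+1)) y i j :
  GCy lam P G y i j = - lam^-1 * (P i j * G i j - P i j * Umx y i j).
Proof.
by rewrite /GCy /alg_T !mxE.
Qed.

Lemma top_GCy m n lam (P G : 'M[R]_(m, n.+1)) y :
  lam != 0 -> (forall i j, P i j != 0) ->
  lam *: diag_mx (map_mx (fun x => x^-1) (vec P))^T *m vec (GCy lam P G y)
    - Etilde R m n.+1 *m y = - vec G.
Proof.
move=> hl hP; apply/matrixP => k c; rewrite (ord1 c); case/mxvec_indexP: k => j i.
rewrite top_entry GCy_entry [RHS]mxE vecE.
by field; rewrite hl hP.
Qed.

Lemma top_uniq m n lam (P G : 'M[R]_(m, n.+1)) y x :
  lam != 0 -> (forall i j, P i j != 0) ->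
  lam *: diag_mx (map_mx (fun x => x^-1) (vec P))^T *m x
    - Etilde R m n.+1 *m y = - vec G ->
  x = vec (GCy lam P G y).
Proof.
move=> hl hP h; rewrite -(unvecK x) in h *; congr vec.
apply/matrixP => i j.
have e : (lam *: diag_mx (map_mx (fun x => x^-1) (vec P))^T *m vec (unvec x)
    - Etilde R m n.+1 *m y) (mxvec_index j i) 0 = (- vec G) (mxvec_index j i) 0.
  by rewrite h.
rewrite top_entry [RHS]mxE vecE in e.
rewrite GCy_entry.
set u := Umx y i j in e *; set X := unvec x i j in e *.
have e' : lam / P i j * X = u - G i j by rewrite -[LHS](subrK u) e addrC.
have -> : X = P i j / lam * (lam / P i j * X) by field; rewrite hl hP.
rewrite e'; field; by rewrite hl.
Qed.

End Aux.

Unset Implicit Arguments. Set Strict Implicit.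

Theorem theorem2 (R : realType) (m n : nat) (lam : R)
  (C : 'M[R]_(m, n)) (a : 'cV[R]_m) (b : 'cV[R]_n) (P G : 'M[R]_(m, n)) :
  (2 <= m)%N -> (2 <= n)%N -> 0 < lam ->
  in_simplex a -> in_simplex b ->
  (forall i, 0 < a i 0) -> (forall j, 0 < b j 0) ->
  is_sinkhorn lam C a b P ->
  alg_K a b P \in unitmx /\
  kkt lam P *m col_mx (vec (alg_GC lam a b P G)) (- alg_g a b P G)
    = col_mx (- vec G) 0 /\
  (forall (x : 'cV[R]_(n * m)) (y : 'cV[R]_(m + n.-1)),
     kkt lam P *m col_mx x (- y) = col_mx (- vec G) 0 ->
     x = vec (alg_GC lam a b P G) /\ y = alg_g a b P G).
Proof.
move=> hm hn hl sa sb apos bpos hsk.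
have Ppos := sinkhorn_pos hl apos bpos hsk.
case: hsk => [[_ [ha hb]] _].
destruct n as [|n]; first by [].
destruct m as [|m]; first by [].
have Kunit := K_unit ord0 Ppos ha hb.
have hl0 : lam != 0 by rewrite gt_eqF.
have hP0 : forall i j, P i j != 0 by move=> i j; rewrite gt_eqF.
split; first exact: Kunit.
split.
  by rewrite kkt_mul GC_eq top_GCy // (@EtT_GCy R m.+1 n lam a b P G _ ha hb) mulKVmx // subrr scaler0.
move=> x y; rewrite kkt_mul => /eq_col_mx [h1 h2].
have ex := top_uniq hl0 hP0 h1.
rewrite ex (@EtT_GCy R m.+1 n lam a b P G _ ha hb) in h2.
have ht : col_mx (alg_ta P G) (alg_tb P G) = alg_K a b P *m y.
  apply/eqP; rewrite -subr_eq0; move/eqP: h2.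
  by rewrite scaler_eq0 oppr_eq0 invr_eq0 (negbTE hl0).
have ey : y = alg_g a b P G by rewrite /alg_g ht mulKmx.
by split; [rewrite ex ey GC_eq | exact: ey].
Qed.
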